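(* $\mathbf{CF_{REG}}=\mathbf{CF}$, where $\mathbf{CF}$ is the family of context-free languages and $\mathbf{CF_{REG}}$ is the family of all languages $L(G,F)$ such that $G=(V,T,P,S)$ is a context-free grammar and $F\subseteq W^*$ is a regular language for some $W\subseteq V$.
   Context: A context-free grammar $G=(V,T,P,S)$ has total alphabet $V$, terminal alphabet $T\subseteq V$, nonterminal alphabet $N=V-T$, finite rule set $P\subseteq N\times V^*$, start symbol $S\in N$; $\phi(G)=\{w\in V^*\mid S\Rightarrow^* w\}$ is its set of sentential forms. For $X\subseteq V$, $\pi_X$ denotes the homomorphism from $V^*$ to $X^*$ with $\pi_X(a)=a$ for $a\in X$ and $\pi_X(a)=\varepsilon$ for $a\in V-X$. For $W\subseteq V$ and $F\subseteq W^*$, set $\phi(G,F)=\{x\in\phi(G)\mid \pi_W(x)\in F\}$ and $L(G,F)=\{\pi_T(y)\mid y\in\phi(G,F),\ \pi_{N-W}(y)=\varepsilon\}$. *)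

(* Defs.v *)
From mathcomp Require Import all_boot.

(* Nonterminals form a finite type [nt G]; the total alphabet is V = T + N,
   terminals being [inl a] and nonterminals [inr A]. *)
Record cfg (T : finType) := CFG {
  nt : finType;
  rules : seq (nt * seq (T + nt));
  start : nt }.
Arguments nt {T}. Arguments rules {T}. Arguments start {T}.

Definition sym {T : finType} (G : cfg T) : finType := (T + nt G)%type.

Definition step {T : finType} (G : cfg T) (u v : seq (sym G)) : Prop :=
  exists (x y : seq (sym G)) (A : nt G) (w : seq (sym G)),
    (A, w) \in rules G /\ u = x ++ inr A :: y /\ v = x ++ w ++ y.

Inductive derives {T : finType} (G : cfg T) : seq (sym G) -> seq (sym G) -> Prop :=
| derives_refl (u : seq (sym G)) : derives G u u
| derives_step (u v w : seq (sym G)) : step G u v -> derives G v w -> derives G u w.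

Definition sentential {T : finType} (G : cfg T) (x : seq (sym G)) : Prop :=
  derives G [:: inr (start G)] x.

Definition proj {A : Type} (X : pred A) (x : seq A) : seq A := filter X x.

Definition is_nt {T : finType} (G : cfg T) : pred (sym G) :=
  fun s => if s is inr _ then true else false.

Definition projT {T : finType} (G : cfg T) (x : seq (sym G)) : seq T :=
  pmap (fun s : sym G => if s is inl a then Some a else None) x.

Record dfa (A : finType) := DFA {
  dstate : finType;
  dinit : dstate;
  dacc : pred dstate;
  dtrans : dstate -> A -> dstate }.
Arguments dstate {A}. Arguments dinit {A}. Arguments dacc {A}. Arguments dtrans {A}.

Definition dfa_accepts {A : finType} (D : dfa A) (w : seq A) : bool :=
  dacc D (foldl (dtrans D) (dinit D) w).

Definition regular {A : finType} (L : seq A -> Prop) : Prop :=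
  exists D : dfa A, forall w, L w <-> dfa_accepts D w.

Definition cf_generates {T : finType} (G : cfg T) (w : seq T) : Prop :=
  sentential G (map inl w).

Definition is_CF {T : finType} (L : seq T -> Prop) : Prop :=
  exists G : cfg T, forall w, L w <-> cf_generates G w.

Definition phiGF {T : finType} (G : cfg T) (W : pred (sym G))
  (F : seq (sym G) -> Prop) (x : seq (sym G)) : Prop :=
  sentential G x /\ F (proj W x).

Definition LGF {T : finType} (G : cfg T) (W : pred (sym G))
  (F : seq (sym G) -> Prop) (w : seq T) : Prop :=
  exists y, phiGF G W F y /\
    proj (fun s => is_nt G s && ~~ W s) y = [::] /\ w = projT G y.

(* membership of L in the family CF_REG: L = L(G,F) for a CFG G, some W subset of V
   and a regular F subset of W^* (F given as a regular language over V all of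
   whose words lie in W^* ) *)
Definition is_CF_REG {T : finType} (L : seq T -> Prop) : Prop :=
  exists (G : cfg T) (W : pred (sym G)) (F : seq (sym G) -> Prop),
    regular F /\ (forall x, F x -> all W x) /\
    (forall w, L w <-> LGF G W F w).

(* Main.v *)
Require Import Defs.
From mathcomp Require Import all_boot.



Inductive gl {T : finType} (G : cfg T) : seq (sym G) -> seq (sym G) -> Prop :=
| gl_nil : gl G [::] [::]
| gl_sym X u v : gl G u v -> gl G (X :: u) (X :: v)
| gl_rule A Xs u v1 v2 : (A, Xs) \in rules G -> gl G Xs v1 -> gl G u v2 ->
    gl G (inr A :: u) (v1 ++ v2).

Set Implicit Arguments. Unset Strict Implicit.
Arguments gl_rule {T G A Xs u v1 v2}.
Arguments gl_sym {T G X u v}.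
Lemma gl_refl {T : finType} (G : cfg T) u : gl G u u.
Proof. elim: u => [|X u IH]; [exact: gl_nil | exact: gl_sym]. Qed.

Lemma gl_cat {T : finType} (G : cfg T) a b za zb :
  gl G a za -> gl G b zb -> gl G (a ++ b) (za ++ zb).
Proof.
move=> H Hb; elim: H => [|X u v _ IH|A Xs u v1 v2 HA H1 _ _ IH] /=.
- by [].
- by apply: gl_sym.
- rewrite -catA; exact: (gl_rule HA H1 IH).
Qed.

Lemma gl_catE {T : finType} (G : cfg T) a b z :
  gl G (a ++ b) z -> exists za zb, z = za ++ zb /\ gl G a za /\ gl G b zb.
Proof.
elim: a z => [|X a IH] z /= H.
- by exists [::], z; split => //; split => //; exact: gl_nil.
- inversion H as [|X0 u0 v0 Hu E1 E2|A0 Xs0 u0 v1 v2 HA Hx Hu E1 E2]; subst.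
  + have [za [zb [-> [Ka Kb]]]] := IH _ Hu.
    by exists (X :: za), zb; split => //; split => //; apply: gl_sym.
  + have [za [zb [-> [Ka Kb]]]] := IH _ Hu.
    exists (v1 ++ za), zb; split; first by rewrite catA.
    by split => //; apply: (gl_rule HA Hx Ka).
Qed.

Lemma derives_gl {T : finType} (G : cfg T) u v : derives G u v -> gl G u v.
Proof.
elim => [w|u' v' w [x [y [A [r [HA [-> ->]]]]]] _ IH]; first exact: gl_refl.
have [zx [z1 [-> [Hx H1]]]] := gl_catE IH.
have [zw [zy [-> [Hw Hy]]]] := gl_catE H1.
apply: gl_cat => //; exact: (gl_rule HA Hw Hy).
Qed.

Lemma derives_trans {T : finType} (G : cfg T) u v w :
  derives G u v -> derives G v w -> derives G u w.
Proof.
move=> H; elim: H w => // u' v' w' S _ IH w H; apply: derives_step S _; exact: IH.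
Qed.

Lemma derives_ctx {T : finType} (G : cfg T) x y u v :
  derives G u v -> derives G (x ++ u ++ y) (x ++ v ++ y).
Proof.
elim => [w|u' v' w [x' [y' [A [r [HA [-> ->]]]]]] _ IH]; first exact: derives_refl.
apply: derives_step IH.
exists (x ++ x'), (y' ++ y), A, r; split => //.
by rewrite -!catA /=; split => //; rewrite -!catA.
Qed.

Lemma gl_derives {T : finType} (G : cfg T) u v : gl G u v -> derives G u v.
Proof.
elim.
- exact: derives_refl.
- by move=> X u' v' _ H; have := derives_ctx [:: X] [::] H; rewrite !cats0.
- move=> A Xs u' v1 v2 HA _ H1 _ H2.
  apply: (@derives_step _ _ _ (Xs ++ u')).
    by exists [::], u', A, Xs.
  apply: (@derives_trans _ _ _ (v1 ++ u')).
    by have := derives_ctx [::] u' H1.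
  by have := derives_ctx v1 [::] H2; rewrite !cats0.
Qed.

Unset Implicit Arguments. Set Implicit Arguments. Unset Strict Implicit.

Section Constr.
Variables (T : finType) (G : cfg T) (W : pred (sym G)) (D : dfa (sym G)).

Definition Q := dstate D.
Definition dW (p : dstate D) (s : sym G) := if W s then dtrans D p s else p.
Definition run p (y : seq (sym G)) := foldl dW p y.

Lemma run_filter p y : run p y = foldl (dtrans D) p (filter W y).
Proof. by elim: y p => //= s y IH p; rewrite /dW; case: (W s) => /=. Qed.

Fixpoint allseqs (n : nat) : seq (seq (dstate D)) :=
  if n is n'.+1 then [seq q :: s | q <- enum (dstate D), s <- allseqs n'] else [:: [::]].

Lemma allseqs_size n qs : qs \in allseqs n -> size qs = n.
Proof.
elim: n qs => [|n IH] qs /=; first by rewrite inE => /eqP ->.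
by case/allpairsP => [[q s]] /= [_ Hs ->] /=; rewrite (IH _ Hs).
Qed.

Lemma allseqs_mem qs : qs \in allseqs (size qs).
Proof.
elim: qs => [|q qs IH] /=; first by rewrite inE.
by apply: (allpairs_f (fun q s => q :: s)) => //; rewrite mem_enum.
Qed.

Fixpoint chain (p : dstate D) (Xs : seq (sym G)) (qs : seq (dstate D))
  : seq (option (dstate D * sym G * dstate D)) :=
  match Xs, qs with
  | X :: Xs', q :: qs' => Some (p, X, q) :: chain q Xs' qs'
  | _, _ => [::]
  end.

Definition NT := option (dstate D * sym G * dstate D).

Definition rules' : seq (option (dstate D * sym G * dstate D) * seq (T + option (dstate D * sym G * dstate D))) :=
  [seq (None, [:: inr (Some (dinit D, inr (start G), f))]) | f <- [seq f <- enum (dstate D) | dacc D f]]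
  ++ [seq (Some (p, inl a, dW p (inl a)), [:: inl a]) | p <- enum (dstate D), a <- enum T]
  ++ [seq (Some (p, inr B, dtrans D p (inr B)), [::]) | p <- enum (dstate D), B <- [seq B <- enum (nt G) | W (inr B)]]
  ++ flatten [seq [seq (Some (p, inr r.1, last p qs), map inr (chain p r.2 qs)) | p <- enum (dstate D), qs <- allseqs (size r.2)] | r <- rules G].

Definition G' : cfg T := @CFG T _ rules' None.

Lemma rules'_inv A rhs : (A, rhs) \in rules G' ->
 (A = None /\ exists f, dacc D f /\ rhs = [:: inr (Some (dinit D, inr (start G), f))]) \/
 (exists p a, A = Some (p, inl a, dW p (inl a)) /\ rhs = [:: inl a]) \/
 (exists p B, W (inr B) /\ A = Some (p, inr B, dtrans D p (inr B)) /\ rhs = [::]) \/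
 (exists p B Xs qs, (B, Xs) \in rules G /\ size qs = size Xs /\ A = Some (p, inr B, last p qs) /\ rhs = map inr (chain p Xs qs)).
Proof.
rewrite /= !mem_cat => /or4P [].
- case/mapP => f; rewrite mem_filter => /andP [Hf _] [-> ->]; left; split => //; by exists f.
- case/allpairsP => [[p a]] /= [_ _ [-> ->]]; right; left; by exists p, a.
- case/allpairsP => [[p B]] /= [_ HB [-> ->]]; right; right; left.
  by exists p, B; move: HB; rewrite mem_filter => /andP [-> _].
- case/flattenP => s /mapP [r Hr ->] /allpairsP [[p qs]] /= [_ Hqs [-> ->]].
  right; right; right; exists p, r.1, r.2, qs; split; first by rewrite -surjective_pairing.
  by rewrite (allseqs_size Hqs).
Qed.


Definition okw (y : seq (sym G)) := all (fun s => ~~ (is_nt G s && ~~ W s)) y.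

Lemma okw_proj y : proj (fun s => is_nt G s && ~~ W s) y = [::] <-> okw y.
Proof.
rewrite /proj /okw; elim: y => //= s y IH.
by case: (is_nt G s && ~~ W s) => /=.
Qed.

Definition Sem (s : sym G') (w : seq T) : Prop :=
  match s with
  | inl a => w = [:: a]
  | inr None => exists y, gl G [:: inr (start G)] y /\ okw y /\ projT G y = w /\ dacc D (run (dinit D) y)
  | inr (Some (p, X, q)) => exists y, gl G [:: X] y /\ okw y /\ projT G y = w /\ run p y = q
  end.

Fixpoint SemL (u : seq (sym G')) (w : seq T) : Prop :=
  match u with
  | [::] => w = [::]
  | s :: u' => exists w1 w2, w = w1 ++ w2 /\ Sem s w1 /\ SemL u' w2
  end.

Lemma map_inl_cat (v1 v2 : seq (sym G')) (w : seq T) : v1 ++ v2 = map inl w ->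
  exists w1 w2, w = w1 ++ w2 /\ v1 = map inl w1 /\ v2 = map inl w2.
Proof.
elim: v1 w => [|x v1 IH] [|a w] //=.
- by move=> H; exists [::], [::].
- by move=> H; exists [::], (a :: w).
- case=> -> /IH [w1 [w2 [-> [-> ->]]]]; by exists (a :: w1), w2.
Qed.

Lemma chain_sound p Xs qs w : size qs = size Xs ->
  SemL (map inr (chain p Xs qs)) w ->
  exists y, gl G Xs y /\ okw y /\ projT G y = w /\ run p y = last p qs.
Proof.
elim: Xs p qs w => [|X Xs IH] p [|q qs] w //=.
- move=> _ ->; exists [::]; split; [exact: gl_nil | done].
- case=> Hs [w1 [w2 [-> [[y1 [Hy1 [Ok1 [P1 R1]]]] H2]]]].
  have [y2 [Hy2 [Ok2 [P2 R2]]]] := IH q qs w2 Hs H2.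
  exists (y1 ++ y2); split; first exact: (gl_cat Hy1 Hy2).
  rewrite /okw all_cat -/(okw y1) -/(okw y2) Ok1 Ok2; split => //.
  by rewrite /projT pmap_cat -/(projT G y1) -/(projT G y2) P1 P2 /run foldl_cat -/(run p y1) R1.
Qed.

Lemma soundness u v : gl G' u v -> forall w, v = map inl w -> SemL u w.
Proof.
elim => [|X u0 v0 _ IH|A rhs u0 v1 v2 HA _ IH1 _ IH2] w.
- by case: w.
- case: w => [|a w] //= [-> E]; exists [:: a], w; split => //; split => //; exact: IH.
- move=> E; have [w1 [w2 [-> [E1 E2]]]] := map_inl_cat E.
  exists w1, w2; split => //; split; last exact: IH2.
  have S1 := IH1 _ E1.
  case: (rules'_inv HA) => [[-> [f [Hf Er]]]|[[p [a [-> Er]]]|[[p [B [HB [-> Er]]]]|[p [B [Xs [qs [HBX [Hs [-> Er]]]]]]]]]]; subst rhs.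
  + move: S1 => /= [w3 [w4 [-> [[y [Hy [Ok [P R]]]] ->]]]].
    by exists y; rewrite cats0 R; split.
  + move: S1 => /= [w3 [w4 [-> [-> ->]]]].
    exists [:: inl a]; split; first exact: gl_refl.
    by split.
  + move: S1 => /= ->.
    exists [:: inr B]; split; first exact: gl_refl.
    by rewrite /okw /= HB /run /= /dW HB.
  + have [y [Hy [Ok [P R]]]] := chain_sound Hs S1.
    exists y; split => //.
    by rewrite -[y]cats0; apply: (gl_rule HBX Hy (@gl_nil _ _)).
Qed.

Lemma completeness Xs y : gl G Xs y -> okw y -> forall p, exists qs,
  size qs = size Xs /\ run p y = last p qs /\
  gl G' (map inr (chain p Xs qs)) (map inl (projT G y)).
Proof.
elim => [|X u v _ IH|B Xs0 u v1 v2 HB _ IH1 _ IH2] Ok p.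
- by exists [::]; split => //; split => //; exact: gl_nil.
- move: Ok; rewrite /okw /= => /andP [OkX Ok].
  have [qs [Hs [R Hg]]] := IH Ok (dW p X).
  exists (dW p X :: qs); split; first by rewrite /= Hs.
  split; first by rewrite /run /= -/(run _ v) R.
  clear R; case: X OkX Hg => [a|B] OkX Hg /=.
  + have HA : (Some (p, inl a, dW p (inl a)), [:: inl a]) \in rules G'.
      rewrite /= !mem_cat; apply/or4P; constructor 2.
      by apply: (allpairs_f (fun p a => (Some (p, inl a, dW p (inl a)), [:: inl a]))); rewrite mem_enum.
    exact: (gl_rule (v1 := [:: inl a]) HA (gl_refl _) Hg).
  + move: OkX; rewrite negb_and /= => /negPn HW.
    have HA : (Some (p, inr B, dW p (inr B)), [::]) \in rules G'.
      rewrite /= !mem_cat; apply/or4P; constructor 3.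
      rewrite /dW HW.
      apply: (allpairs_f (fun p B => (Some (p, inr B, dtrans D p (inr B)), [::]))); rewrite ?mem_enum //.
      by rewrite mem_filter HW mem_enum.
    exact: (gl_rule (v1 := [::]) HA (@gl_nil _ _) Hg).
- move: Ok; rewrite /okw all_cat -/(okw v1) -/(okw v2) => /andP [Ok1 Ok2].
  have [qs1 [Hs1 [R1 Hg1]]] := IH1 Ok1 p.
  have [qs2 [Hs2 [R2 Hg2]]] := IH2 Ok2 (run p v1).
  exists (run p v1 :: qs2); split; first by rewrite /= Hs2.
  split; first by rewrite /run foldl_cat -/(run p v1) -/(run _ v2) R2.
  have HA : (Some (p, inr B, last p qs1), map inr (chain p Xs0 qs1)) \in rules G'.
    rewrite /= !mem_cat; apply/or4P; constructor 4.
    apply/flattenP; exists [seq (Some (p, inr (B, Xs0).1, last p qs), map inr (chain p (B, Xs0).2 qs)) | p <- enum (dstate D), qs <- allseqs (size (B, Xs0).2)].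
      by apply: (map_f _ HB).
    apply: (allpairs_f_dep (fun p qs => (Some (p, inr B, last p qs), map inr (chain p Xs0 qs)))); rewrite ?mem_enum //=.
    by rewrite -Hs1 allseqs_mem.
  rewrite -R1 in HA; rewrite /= /projT pmap_cat map_cat.
  exact: (gl_rule HA Hg1 Hg2).
Qed.

End Constr.

Unset Implicit Arguments.

Lemma nt_free {T : finType} (G : cfg T) (y : seq (sym G)) :
  proj (fun s => is_nt G s && ~~ xpred0 s) y = [::] -> y = map inl (projT G y).
Proof.
rewrite /proj /projT; elim: y => //= s y IH.
by case: s => [a|A] //= /IH <-.
Qed.

Theorem theorem1 (T : finType) (L : seq T -> Prop) : is_CF_REG L <-> is_CF L.
Proof.
split.
- move=> [G [W [F [[D HD] [_ HL]]]]].
  exists (G' W D) => w; apply: (iff_trans (HL w)); split.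
  + move=> [y [[Hs HF] [Hp ->]]].
    have Hy := derives_gl Hs.
    have Ok : okw W y by apply/okw_proj.
    have [qs [Hsz [R Hg]]] := completeness Hy Ok (dinit D).
    case: qs Hsz R Hg => [|q [|]] //= _ R Hg.
    have Hq : dacc D q.
      by move: (HD (proj W y)) => [H _]; move: (H HF); rewrite /dfa_accepts -run_filter R.
    have HA : ((None : nt (G' W D)), [:: inr (Some (dinit D, inr (start G), q))]) \in rules (G' W D).
      rewrite /= !mem_cat; apply/or4P; constructor 1.
      by apply/mapP; exists q; rewrite // mem_filter Hq mem_enum.
    apply: gl_derives; rewrite -[map inl _]cats0.
    exact: (gl_rule HA Hg (@gl_nil _ _)).
  + move=> Hc; have := soundness (derives_gl Hc) (erefl _).
    move=> [w1 [w2 [-> [[y [Hy [Ok [P R]]]] ->]]]].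
    exists y; split; first split.
    * exact: gl_derives.
    * by apply/HD; rewrite /dfa_accepts -run_filter.
    * by rewrite cats0 P; split => //; apply/okw_proj.
- move=> [G HG]; exists G, xpred0, (fun x => x = [::]); split.
    exists (@DFA _ bool true id (fun _ _ => false)) => w.
    rewrite /dfa_accepts /=; case: w => [|a w] /=; first by [].
    have -> : foldl (fun _ _ => false) false w = false by elim: w.
    by [].
  split; first by move=> x ->.
  move=> w; apply: (iff_trans (HG w)); split.
  + move=> Hc; exists (map inl w); split.
      split; first exact: Hc.
      by rewrite /proj filter_pred0.
    split; first by rewrite /proj; elim: w {Hc}.
    by rewrite /projT; elim: w {Hc} => //= a w <-.
  + move=> [y [[Hs _] [Hp ->]]]; by rewrite /cf_generates -(@nt_free _ G y Hp).
Qed.
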